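(* For all integers $0 <k \leq \ell <n$, \[ \begin{aligned} D(n-k,k)\, D(n-\ell,\ell) &\geq D(n-k+1,k-1)\, D(n-\ell-1,\ell+1), \\ D(n-k,k)\, D(n-\ell,\ell) &\geq D(n-k,k-1)\, D(n-\ell,\ell+1). \end{aligned} \]
   Context: For non-negative integers $m,n$, the Delannoy number $D(m,n)$ is the number of lattice paths from $(0,0)$ to $(m,n)$ using only steps from $(i,j)$ to $(i+1,j)$, $(i,j+1)$ or $(i+1,j+1)$. *)

(* Defs.v *)
From mathcomp Require Import all_boot.

(* Delannoy number D(m,n): number of lattice paths from (0,0) to (m,n) with
   steps (1,0), (0,1), (1,1). *)
Fixpoint delannoy (m : nat) : nat -> nat :=
  match m with
  | 0 => fun _ => 1
  | m'.+1 =>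
      fix dn (n : nat) : nat :=
        match n with
        | 0 => 1
        | n'.+1 => delannoy m' n'.+1 + dn n' + delannoy m' n'
        end
  end.

(* Main.v *)
Require Import Defs.
From mathcomp Require Import all_boot.
From mathcomp Require Import zify.

Definition LC (f : nat -> nat) := forall n, f n * f n.+2 <= f n.+1 * f n.+1.
Definition posf (f : nat -> nat) := forall n, 0 < f n.

Lemma ratio_trans x y z w u v : 0 < w -> x * w <= z * y -> z * v <= u * w ->
  x * v <= u * y.
Proof.
move=> w0 h1 h2.
have h: x * v * w <= u * y * w.
  apply: (@leq_trans (z * y * v)).
    by rewrite mulnAC leq_mul2r h1 orbT.
  have e1 : z * y * v = y * (z * v) by rewrite mulnAC mulnC.
  have e2 : u * y * w = y * (u * w) by rewrite mulnAC mulnC.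
  by rewrite e1 e2 leq_mul2l h2 orbT.
by rewrite leq_pmul2r in h.
Qed.

Lemma ratio_gen f i d : posf f ->
  (forall t, i <= t -> t < i + d -> f t * f t.+2 <= f t.+1 * f t.+1) ->
  f i * f (i + d).+1 <= f i.+1 * f (i + d).
Proof.
move=> fp; elim: d => [|d IH] H.
  by rewrite addn0 mulnC.
rewrite addnS.
have h1 : f (i + d) * f (i + d).+2 <= f (i + d).+1 * f (i + d).+1.
  by apply: H; [exact: leq_addr | rewrite addnS ltnS].
have IH' : f i * f (i + d).+1 <= f i.+1 * f (i + d).
  apply: IH => t it td; apply: H => //; rewrite addnS; exact: ltnW.
rewrite mulnC.
apply: (@ratio_trans _ _ (f (i + d).+1) (f (i + d))).
- exact: fp.
- by rewrite mulnC.
- by rewrite mulnC.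
Qed.

Lemma ratio f i j : posf f -> LC f -> i <= j -> f i * f j.+1 <= f i.+1 * f j.
Proof.
move=> fp fl ij; rewrite -(subnKC ij); apply: ratio_gen => // t _ _; exact: fl.
Qed.

Arguments ratio {f i j}.

Fixpoint psum (f : nat -> nat) n := if n is n'.+1 then psum f n' + f n else f 0.

Lemma psumS f n : psum f n.+1 = f 0 + psum (fun i => f i.+1) n.
Proof.
elim: n => [|n IH]; first by [].
have -> : psum f n.+2 = psum f n.+1 + f n.+2 by [].
by rewrite IH -addnA.
Qed.

Lemma psum_pos f n : posf f -> 0 < psum f n.
Proof. move=> fp; case: n => [|n] /=; first exact: fp. by rewrite addn_gt0 fp orbT. Qed.

Lemma psum_ratio f n j : posf f -> LC f -> n <= j ->
  psum f n * f j.+1 <= psum (fun i => f i.+1) n * f j.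
Proof.
move=> fp fl; elim: n => [|n IH] nj /=.
  exact: ratio.
have h1 := IH (ltnW nj).
have h2 := ratio fp fl nj.
rewrite !mulnDl; exact: leq_add.
Qed.

Arguments psum_ratio {f} n {j}.

Lemma psum_key f n : posf f -> LC f -> psum f n * f n.+2 <= psum f n.+1 * f n.+1.
Proof.
move=> fp fl.
have h := psum_ratio n fp fl (leqnSn n).
apply: (leq_trans h); rewrite psumS leq_mul2r leq_addl orbT //.
Qed.

Arguments psum_key {f} n.

Lemma psum_LC f : posf f -> LC f -> LC (psum f).
Proof.
move=> fp fl n.
have h := psum_key n fp fl.
move: h => /=; nia.
Qed.

Arguments psum_LC {f}.

Definition sconv f n := if n is n'.+1 then psum f n + psum f n' else psum f 0.

Lemma sconv_LC f : posf f -> LC f -> LC (sconv f).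
Proof.
move=> fp fl.
have pl := psum_LC fp fl.
have pp : posf (psum f) by move=> k; exact: psum_pos.
case=> [|n].
  have := pl 0; rewrite /=; nia.
have e : forall k, sconv f k.+1 = psum f k.+1 + psum f k by [].
rewrite !e.
have h1 := pl n; have h2 := pl n.+1.
have h3 := ratio pp pl (leqnSn n.+1).
have h4 : psum f n * psum f n.+3 <= psum f n.+1 * psum f n.+2.
  exact: (@ratio _ n n.+2 pp pl (leqW (leqnSn n))).
move: h1 h2 h3 h4.
set U0 := psum f n; set U1 := psum f n.+1; set U2 := psum f n.+2; set U3 := psum f n.+3.
move=> h1 h2 h3 h4.
nia.
Qed.

Lemma sconv_TP f j : posf f -> LC f -> f j.+1 * sconv f j <= f j * sconv f j.+1.
Proof.
move=> fp fl; case: j => [|j] /=.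
  nia.
have k := psum_key j fp fl.
move: k => /=; nia.
Qed.

Notation D := delannoy.

Lemma DS m n : D m.+1 n.+1 = D m n.+1 + D m.+1 n + D m n.
Proof. by []. Qed.

Lemma D0 m : D m 0 = 1.
Proof. by case: m. Qed.

Lemma Dpos m n : 0 < D m n.
Proof.
elim: m n => [|m IH] n; first by [].
case: n => [|n]; first by [].
by rewrite DS !addn_gt0 IH.
Qed.

Lemma Dsym m n : D m n = D n m.
Proof.
elim: m n => [|m IH] n; first by rewrite D0.
elim: n => [|n IHn]; first by rewrite D0.
by rewrite !DS IHn !IH; congr (_ + _); rewrite addnC.
Qed.

Lemma rowrel m n : D m.+1 n = sconv (D m) n.
Proof.
elim: n => [|n IH]; first by rewrite /= D0.
rewrite DS IH; case: n {IH} => [|n] /=; rewrite ?D0; lia.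
Qed.

Lemma rowLC m : LC (D m).
Proof.
elim: m => [|m IH] n; first by [].
rewrite !rowrel; apply: sconv_LC => //; move=> k; exact: Dpos.
Qed.

Lemma TP m j : D m j.+1 * D m.+1 j <= D m j * D m.+1 j.+1.
Proof. rewrite !rowrel; apply: sconv_TP; [move=> k; exact: Dpos | exact: rowLC]. Qed.

Lemma TPgen b d j : D b j.+1 * D (b + d) j <= D b j * D (b + d) j.+1.
Proof.
elim: d => [|d IH]; first by rewrite addn0 mulnC.
rewrite addnS [X in _ <= X]mulnC.
apply: (@ratio_trans _ _ (D (b + d) j.+1) (D (b + d) j)).
- exact: Dpos.
- by rewrite [X in _ <= X]mulnC.
- by rewrite [X in _ <= X]mulnC; exact: TP.
Qed.

Lemma anti p t : D p.+2 t * D p t.+2 <= D p.+1 t.+1 * D p.+1 t.+1.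
Proof.
set c := D p.+1 t.+1.
have h1 : D p.+2 t * c <= D p.+1 t * D p.+2 t.+1 by rewrite mulnC; exact: TP.
have h2 : D p t.+2 * c <= D p t.+1 * D p.+1 t.+2 by exact: TP.
have h3 : D p.+1 t * D p.+1 t.+2 <= c * c by exact: rowLC.
have h4 : D p t.+1 * D p.+2 t.+1 <= c * c.
  rewrite /c ![D _ t.+1]Dsym; exact: rowLC.
have c0 : 0 < c * c by rewrite muln_gt0 Dpos.
rewrite -(leq_pmul2r c0).
apply: (@leq_trans ((D p.+2 t * c) * (D p t.+2 * c))).
  by rewrite leq_eqVlt; apply/orP; left; apply/eqP; nia.
apply: (@leq_trans ((D p.+1 t * D p.+2 t.+1) * (D p t.+1 * D p.+1 t.+2))).
  exact: leq_mul.
apply: (@leq_trans ((D p.+1 t * D p.+1 t.+2) * (D p t.+1 * D p.+2 t.+1))).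
  by rewrite leq_eqVlt; apply/orP; left; apply/eqP; nia.
exact: leq_mul.
Qed.

Theorem corollary6p3 (n k l : nat) :
  0 < k -> k <= l -> l < n ->
  delannoy (n - k).+1 k.-1 * delannoy (n - l).-1 l.+1
    <= delannoy (n - k) k * delannoy (n - l) l /\
  delannoy (n - k) k.-1 * delannoy (n - l) l.+1
    <= delannoy (n - k) k * delannoy (n - l) l.
Proof.
case: k => [|k] // _ kl ln.
rewrite [k.+1.-1]/=.
split.
  pose f t := D (n - t) t.
  have fp : posf f by move=> t; exact: Dpos.
  have hr := @ratio_gen f k (l - k) fp.
  have e : k + (l - k) = l by lia.
  rewrite e in hr.
  have -> : (n - k.+1).+1 = n - k by lia.
  have -> : (n - l).-1 = n - l.+1 by lia.
  apply: hr => t kt tl.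
  rewrite /f.
  have -> : n - t = (n - t.+2).+2 by lia.
  have -> : n - t.+1 = (n - t.+2).+1 by lia.
  exact: anti.
have ba : n - l <= n - k.+1 by lia.
have hb := ratio (fun t => Dpos (n - l) t) (rowLC (n - l)) (ltnW kl).
have ht := TPgen (n - l) (n - k.+1 - (n - l)) k.
rewrite subnKC // in ht.
rewrite mulnC.
apply: (@ratio_trans _ _ (D (n - l) k.+1) (D (n - l) k)) => //.
- exact: Dpos.
- by rewrite mulnC.
- by rewrite [X in _ <= X]mulnC.
Qed.
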